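(* Let $H$ be a Hopf algebra over $\mathbb{C}$ with antipode $S$ and $A$ a left $H$-module algebra. On the Kadison bialgebroid $(A\otimes A^{op})\bowtie H$ (underlying space $A\otimes A\otimes H$) with product $(a\otimes b\otimes h)(a'\otimes b'\otimes h')=a(h_{(1)}\triangleright a')\otimes b'(S(h'_{(2)})\triangleright b)\otimes h_{(2)}h'_{(1)}$, source $a\mapsto a\otimes1\otimes1$, target $a\mapsto1\otimes a\otimes1$, coproduct $(a\otimes b)\otimes h\mapsto((a\otimes1)\otimes h_{(1)})\otimes_A((1\otimes b)\otimes h_{(2)})$ and counit $(a\otimes b)\otimes h\mapsto a(h\triangleright b)$, the map $\nu:\mathcal K\otimes_{A^{op}}\mathcal K\to\mathcal K\otimes_A\mathcal K$, $(a\otimes b\otimes h)\otimes(a'\otimes b'\otimes h')\mapsto(a\otimes1\otimes h_{(1)})\otimes_A\big((h_{(2)}\triangleright a')\otimes b'(S(h'_{(2)})\triangleright b)\otimes h_{(3)}h'_{(1)}\big)$, is bijective, with inverse $(a\otimes b\otimes h)\otimes_A(a'\otimes b'\otimes h')\mapsto(a\otimes1\otimes h_{(1)})\otimes_{A^{op}}\big((b\otimes1\otimes S(h_{(2)}))\cdot(a'\otimes b'\otimes h')\big)$. Hence $(A\otimes A^{op})\bowtie H$ is a left $\times_A$-Hopf algebra.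
   Context: A left $R$-bialgebroid is a $\mathbb{C}$-algebra $\mathcal K$ with algebra maps $\mathfrak s:R\to\mathcal K$ (source), $\mathfrak t:R^{op}\to\mathcal K$ (target) with commuting ranges, $R$-bimodule structure $r_1\cdot k\cdot r_2=\mathfrak s(r_1)\mathfrak t(r_2)k$, and $R$-bimodule maps $\Delta(k)=k_{(1)}\otimes_R k_{(2)}$, $\varepsilon:\mathcal K\to R$ forming a coassociative counital $R$-coring, with $k_{(1)}\mathfrak t(r)\otimes_R k_{(2)}=k_{(1)}\otimes_R k_{(2)}\mathfrak s(r)$, $\Delta(1)=1\otimes_R1$, $\Delta(kk')=k_{(1)}k'_{(1)}\otimes_R k_{(2)}k'_{(2)}$, $\varepsilon(1)=1_R$, $\varepsilon(kk')=\varepsilon(k\mathfrak s(\varepsilon(k')))$. It is a left $\times_R$-Hopf algebra if $\nu:\mathcal K\otimes_{R^{op}}\mathcal K\to\mathcal K\otimes_R\mathcal K$, $k\otimes k'\mapsto k_{(1)}\otimes_R k_{(2)}k'$, is bijective, where the domain is balanced by $k\mathfrak t(r)\otimes k'=k\otimes\mathfrak t(r)k'$. Here $\mathcal K=(A\otimes A^{op})\bowtie H$ and $R=A$. The Kadison structure is taken as a left $A$-bialgebroid (Kadison). *)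

(* Defs.v *)
From HB Require Import structures.
From mathcomp Require Import all_boot all_order all_algebra.
Set Implicit Arguments. Unset Strict Implicit. Unset Printing Implicit Defensive.
Import GRing.Theory.
Local Open Scope ring_scope.

Section Defs.
Variable F : fieldType.

Definition bilin (U V W : lmodType F) (f : U -> V -> W) : Prop :=
  (forall u, linear (f u)) /\ (forall v, linear (fun u => f u v)).

Definition trilin (U V X W : lmodType F) (f : U -> V -> X -> W) : Prop :=
  (forall u v, linear (f u v)) /\ (forall u x, linear (fun v => f u v x))
  /\ (forall v x, linear (fun u => f u v x)).

(* Equality of two formal sums of simple tensors in U (x)_F V, i.e. equality
   of their images in the tensor product (universal property: all bilinear
   maps into all F-vector spaces agree). *)
Definition teq2 (U V : lmodType F) (s t : seq (U * V)) : Prop :=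
  forall (W : lmodType F) (f : U -> V -> W), bilin f ->
    \sum_(p <- s) f p.1 p.2 = \sum_(p <- t) f p.1 p.2.

(* Hopf algebra structure on an F-algebra H; the coproduct Delta(x) is given
   by a (Sweedler) representative  cop x : seq (H * H), i.e.
   Delta(x) = \sum_(p <- cop x) p.1 (x) p.2 in H (x)_F H. *)
Record HopfAlg (H : algType F) := {
  cop : H -> seq (H * H);
  eps : H -> F;
  antip : H -> H;
  cop_lin : forall (a : F) (x y : H),
    teq2 (cop (a *: x + y)) ([seq (a *: p.1, p.2) | p <- cop x] ++ cop y);
  cop_mul : forall x y : H,
    teq2 (cop (x * y)) [seq (p.1 * q.1, p.2 * q.2) | p <- cop x, q <- cop y];
  cop_one : teq2 (cop 1) [:: (1, 1)];
  cop_coass : forall (x : H) (W : lmodType F) (f : H -> H -> H -> W), trilin f ->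
    \sum_(p <- cop x) \sum_(q <- cop p.1) f q.1 q.2 p.2
    = \sum_(p <- cop x) \sum_(q <- cop p.2) f p.1 q.1 q.2;
  eps_lin : forall (a : F) (x y : H), eps (a *: x + y) = a * eps x + eps y;
  eps_mul : forall x y : H, eps (x * y) = eps x * eps y;
  eps_one : eps 1 = 1;
  counitl : forall x : H, \sum_(p <- cop x) eps p.1 *: p.2 = x;
  counitr : forall x : H, \sum_(p <- cop x) eps p.2 *: p.1 = x;
  antip_lin : forall (a : F) (x y : H), antip (a *: x + y) = a *: antip x + antip y;
  antipl : forall x : H, \sum_(p <- cop x) antip p.1 * p.2 = eps x *: 1;
  antipr : forall x : H, \sum_(p <- cop x) p.1 * antip p.2 = eps x *: 1
}.

Record ModAlg (H : algType F) (HH : HopfAlg H) (A : algType F)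
    (act : H -> A -> A) : Prop := {
  act_bilin : bilin act;
  act_mul : forall (x y : H) (a : A), act (x * y) a = act x (act y a);
  act_one : forall a : A, act 1 a = a;
  act_alg_mul : forall (h : H) (a b : A),
    act h (a * b) = \sum_(p <- cop HH h) act p.1 a * act p.2 b;
  act_alg_one : forall h : H, act h 1 = eps HH h *: 1
}.

Definition is_tensor3 (U V X K : lmodType F) (t : U -> V -> X -> K) : Prop :=
  trilin t /\
  forall (W : lmodType F) (f : U -> V -> X -> W), trilin f ->
    (exists g : K -> W, linear g /\ forall u v x, g (t u v x) = f u v x) /\
    (forall g1 g2 : K -> W, linear g1 -> linear g2 ->
       (forall u v x, g1 (t u v x) = g2 (t u v x)) -> g1 =1 g2).

Definition is_btensor (R : Type) (K T : lmodType F) (i : K -> K -> T)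
    (kR kL : R -> K -> K) : Prop :=
  bilin i /\ (forall r k k', i (kR r k) k' = i k (kL r k')) /\
  forall (W : lmodType F) (f : K -> K -> W), bilin f ->
    (forall r k k', f (kR r k) k' = f k (kL r k')) ->
    (exists g : T -> W, linear g /\ forall k k', g (i k k') = f k k') /\
    (forall g1 g2 : T -> W, linear g1 -> linear g2 ->
       (forall k k', g1 (i k k') = g2 (i k k')) -> g1 =1 g2).

End Defs.

(* Main.v *)
Require Import Defs.
From HB Require Import structures.
From mathcomp Require Import all_boot all_order all_algebra.
From Stdlib Require Import IndefiniteDescription.
Import GRing.Theory.
Local Open Scope ring_scope.
Set Implicit Arguments. Unset Strict Implicit. Unset Printing Implicit Defensive.

Section Lin.
Variable F : fieldType.
Implicit Types U V W : lmodType F.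

Lemma lin0 U V (f : U -> V) : linear f -> f 0 = 0.
Proof.
move=> Lf; have := Lf 1 0 0; rewrite !scale1r addr0.
by move/(congr1 (fun z => z - f 0)); rewrite addrK subrr => <-.
Qed.
Lemma linD U V (f : U -> V) u v : linear f -> f (u + v) = f u + f v.
Proof. by move=> Lf; have := Lf 1 u v; rewrite !scale1r. Qed.
Lemma linZ U V (f : U -> V) (a : F) u : linear f -> f (a *: u) = a *: f u.
Proof. by move=> Lf; have := Lf a u 0; rewrite !addr0 (lin0 Lf) addr0. Qed.
Lemma lin_sum U V (f : U -> V) I (s : seq I) (P : pred I) G : linear f ->
  f (\sum_(i <- s | P i) G i) = \sum_(i <- s | P i) f (G i).
Proof. move=> Lf; apply: (big_morph f) => [x y|]; [exact: linD|exact: lin0]. Qed.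

Lemma lin_id U : linear (fun x : U => x). Proof. by []. Qed.
Lemma lin_comp U V W (L : V -> W) (g : U -> V) :
  linear L -> linear g -> linear (fun x => L (g x)).
Proof. by move=> LL Lg a u v; rewrite Lg LL. Qed.
Lemma lin_add U V (g1 g2 : U -> V) :
  linear g1 -> linear g2 -> linear (fun x => g1 x + g2 x).
Proof.
move=> L1 L2 a u v; rewrite L1 L2 scalerDr -!addrA; congr (_ + _).
by rewrite addrCA.
Qed.
Lemma lin_scal U V (c : F) (g : U -> V) : linear g -> linear (fun x => c *: g x).
Proof. by move=> Lg a u v; rewrite Lg scalerDr !scalerA mulrC. Qed.
Lemma lin_sumP U V I (s : seq I) (G : U -> I -> V) :
  (forall i, linear (fun x => G x i)) -> linear (fun x => \sum_(i <- s) G x i).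
Proof.
move=> LG a u v; rewrite scaler_sumr -big_split /=; apply: eq_bigr => i _.
exact: LG.
Qed.
Lemma lin_mull (R : algType F) U (a : R) (g : U -> R) :
  linear g -> linear (fun x => a * g x).
Proof. by move=> Lg c u v; rewrite Lg mulrDr scalerAr. Qed.
Lemma lin_mulr (R : algType F) U (a : R) (g : U -> R) :
  linear g -> linear (fun x => g x * a).
Proof. by move=> Lg c u v; rewrite Lg mulrDl scalerAl. Qed.
Lemma lin_scalf U V (v : V) (s : U -> F) :
  (forall c x y, s (c *: x + y) = c * s x + s y) -> linear (fun x => s x *: v).
Proof. by move=> Ls c x y; rewrite Ls scalerDl scalerA. Qed.

End Lin.

Ltac lin_prim_hook := fail.
Ltac lin_spec_hook := fail.
Ltac ml_hook := fail.
Ltac lin_prim := cbv beta; first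
  [ exact: lin_id
  | assumption
  | match goal with Hl : forall _ _ _ _, linear _ |- _ => apply Hl end
  | match goal with Hl : forall _ _ _, linear _ |- _ => apply Hl end
  | match goal with Hl : forall _ _, linear _ |- _ => apply Hl end
  | match goal with Hl : forall _, linear _ |- _ => apply Hl end
  | (apply lin_mull; exact: lin_id)
  | (apply lin_mulr; exact: lin_id)
  | (apply lin_scal; exact: lin_id)
  | lin_prim_hook ].
Ltac lin := cbv beta; first
  [ exact: lin_id
  | lin_prim
  | lin_spec_hook
  | (apply lin_sumP => ?; lin)
  | (apply lin_add; lin)
  | match goal with
    | |- linear (fun x => ?K (@?g x)) =>
        apply (@lin_comp _ _ _ _ (fun z => K z) g); [lin_prim | lin]
    | |- linear (fun x => ?K (@?g x) ?b) =>
        apply (@lin_comp _ _ _ _ (fun z => K z b) g); [lin_prim | lin]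
    | |- linear (fun x => ?K (@?g x) ?b ?c) =>
        apply (@lin_comp _ _ _ _ (fun z => K z b c) g); [lin_prim | lin]
    | |- linear (fun x => ?K (@?g x) ?b ?c ?d) =>
        apply (@lin_comp _ _ _ _ (fun z => K z b c d) g); [lin_prim | lin]
    | |- linear (fun x => ?K (@?g x) ?b ?c ?d ?f) =>
        apply (@lin_comp _ _ _ _ (fun z => K z b c d f) g); [lin_prim | lin]
    end ].


Section Hopf.
Variables (F : fieldType) (H : algType F) (HH : HopfAlg H).
Local Notation S := (antip HH).
Local Notation e := (eps HH).
Implicit Types (W V : lmodType F).

Definition sw (W : lmodType F) (x : H) (f : H -> H -> W) : W :=
  \sum_(p <- cop HH x) f p.1 p.2.

Definition ml3 (W : lmodType F) (g : H -> H -> H -> W) :=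
  [/\ forall b c, linear (fun a => g a b c), forall a c, linear (fun b => g a b c)
    & forall a b, linear (fun c => g a b c)].
Definition ml4 (W : lmodType F) (g : H -> H -> H -> H -> W) :=
  [/\ forall b c d, linear (fun a => g a b c d), forall a c d, linear (fun b => g a b c d),
      forall a b d, linear (fun c => g a b c d) & forall a b c, linear (fun d => g a b c d)].
Definition ml5 (W : lmodType F) (g : H -> H -> H -> H -> H -> W) :=
  [/\ forall b c d x, linear (fun a => g a b c d x), forall a c d x, linear (fun b => g a b c d x),
      forall a b d x, linear (fun c => g a b c d x), forall a b c x, linear (fun d => g a b c d x)
    & forall a b c d, linear (fun x => g a b c d x)].

Lemma sw_ext (W : lmodType F) x (f g : H -> H -> W) : (forall u v, f u v = g u v) -> sw x f = sw x g.
Proof. by move=> fg; apply: eq_bigr => p _; apply: fg. Qed.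

Lemma S_lin : linear S.
Proof. by move=> a x y; rewrite antip_lin. Qed.

Lemma lin_S (U : lmodType F) (g : U -> H) : linear g -> linear (fun x => S (g x)).
Proof. by move=> Lg; apply: (lin_comp S_lin Lg). Qed.

Lemma lin_eps (U W : lmodType F) (g : U -> H) (w : W) :
  linear g -> linear (fun x => e (g x) *: w).
Proof. by move=> Lg c x y; rewrite Lg eps_lin scalerDl scalerA. Qed.

Lemma sw_linC W V x (f : H -> H -> W) (L : W -> V) :
  linear L -> sw x (fun u v => L (f u v)) = L (sw x f).
Proof. by move=> LL; rewrite /sw (lin_sum _ _ _ LL). Qed.

Lemma sw_lin W (f : H -> H -> W) : bilin f -> linear (fun x => sw x f).
Proof.
move=> [fl fr] a x y; rewrite /sw (@cop_lin _ _ HH a x y W f (conj fl fr)).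
rewrite big_cat big_map /= scaler_sumr; congr (_ + _); apply: eq_bigr => p _.
by rewrite -[a *: p.1]addr0 fr (lin0 (fr p.2)) addr0.
Qed.

Lemma sw_linP W x (f : H -> H -> H -> W) :
  (forall u v, linear (fun y => f y u v)) -> linear (fun y => sw x (f y)).
Proof.
move=> Lf a u v; rewrite /sw scaler_sumr -big_split /=; apply: eq_bigr => p _.
exact: Lf.
Qed.

Lemma lin_sw1 (U : lmodType F) W (g : U -> H) (f : H -> H -> W) :
  bilin f -> linear g -> linear (fun y => sw (g y) f).
Proof. by move=> Bf Lg; apply: (lin_comp (sw_lin Bf) Lg). Qed.

Lemma lin_swP (U : lmodType F) W x (f : U -> H -> H -> W) :
  (forall u v, linear (fun y => f y u v)) -> linear (fun y => sw x (f y)).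
Proof.
move=> Lf a u v; rewrite /sw scaler_sumr -big_split /=; apply: eq_bigr => p _.
exact: Lf.
Qed.

Lemma sw_scal W x (c : F) (f : H -> H -> W) :
  sw x (fun u v => c *: f u v) = c *: sw x f.
Proof. by rewrite /sw scaler_sumr. Qed.

Lemma sw_add W x (f g : H -> H -> W) :
  sw x (fun u v => f u v + g u v) = sw x f + sw x g.
Proof. by rewrite /sw big_split. Qed.

Lemma sw_swap W x y (f : H -> H -> H -> H -> W) :
  sw x (fun a b => sw y (fun c d => f a b c d)) = sw y (fun c d => sw x (fun a b => f a b c d)).
Proof. by rewrite /sw exchange_big. Qed.

Lemma sw_mul W x y (f : H -> H -> W) : bilin f ->
  sw (x * y) f = sw x (fun u v => sw y (fun u' v' => f (u * u') (v * v'))).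
Proof.
by move=> Bf; rewrite /sw (@cop_mul _ _ HH x y W f Bf) big_allpairs_dep.
Qed.

Lemma sw_one W (f : H -> H -> W) : bilin f -> sw 1 f = f 1 1.
Proof. by move=> Bf; rewrite /sw (@cop_one _ _ HH W f Bf) big_seq1. Qed.

Definition sw3 W x (g : H -> H -> H -> W) := sw x (fun a y => sw y (fun b c => g a b c)).
Definition sw4 W x (g : H -> H -> H -> H -> W) :=
  sw x (fun a y => sw3 y (fun b c d => g a b c d)).
Definition sw5 W x (g : H -> H -> H -> H -> H -> W) :=
  sw x (fun a y => sw4 y (fun b c d f => g a b c d f)).

Lemma sp2_1 W x (g : H -> H -> H -> W) : ml3 g ->
  sw x (fun a b => sw a (fun a1 a2 => g a1 a2 b)) = sw3 x g.
Proof.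
case=> L1 L2 L3; have := @cop_coass _ _ HH x W g.
by rewrite /sw3 /sw; apply; split; [|split].
Qed.

Lemma counitl' W x (L : H -> W) : linear L -> sw x (fun u v => e u *: L v) = L x.
Proof.
move=> LL; rewrite -{2}(counitl HH x) (lin_sum _ _ _ LL) /sw.
by apply: eq_bigr => p _; rewrite (linZ _ _ LL).
Qed.

Lemma counitr' W x (L : H -> W) : linear L -> sw x (fun u v => e v *: L u) = L x.
Proof.
move=> LL; rewrite -{2}(counitr HH x) (lin_sum _ _ _ LL) /sw.
by apply: eq_bigr => p _; rewrite (linZ _ _ LL).
Qed.

Lemma antipl' W x (L : H -> W) : linear L -> sw x (fun u v => L (S u * v)) = e x *: L 1.
Proof. by move=> LL; rewrite (sw_linC _ _ LL) /sw antipl (linZ _ _ LL). Qed.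

Lemma antipr' W x (L : H -> W) : linear L -> sw x (fun u v => L (u * S v)) = e x *: L 1.
Proof. by move=> LL; rewrite (sw_linC _ _ LL) /sw antipr (linZ _ _ LL). Qed.

End Hopf.

Ltac ml_hook ::= cbv beta; lazymatch goal with
  | |- bilin _ => split => ?; lin
  | |- ml3 _ => split => ? ?; lin
  | |- ml4 _ => split => ? ? ?; lin
  | |- ml5 _ => split => ? ? ? ?; lin
  | |- trilin _ => split; [|split] => ? ?; lin
  end.
Ltac ml := ml_hook.
Ltac lin_prim_hook ::= first
  [ exact: S_lin
  | (apply lin_S; exact: lin_id)
  | (apply lin_sw1; [ml | exact: lin_id]) ].
Ltac lin_spec_hook ::= first
  [ (apply lin_eps; lin)
  | (apply lin_swP => ? ?; lin)
  | (progress unfold sw3, sw4, sw5; lin) ].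


Section Hopf2.
Variables (F : fieldType) (H : algType F) (HH : HopfAlg H).
Local Notation S := (antip HH).
Local Notation e := (eps HH).
Local Notation sw := (sw HH).
Local Notation sw3 := (sw3 HH).
Local Notation sw4 := (sw4 HH).
Local Notation sw5 := (sw5 HH).
Implicit Types (W V : lmodType F).

Lemma sp3_1 W x (g : H -> H -> H -> H -> W) : ml4 g ->
  sw3 x (fun a b c => sw a (fun a1 a2 => g a1 a2 b c)) = sw4 x g.
Proof.
case=> L1 L2 L3 L4; rewrite /sw3 /sw4.
under sw_ext => a y do rewrite sw_swap.
rewrite (@sp2_1 _ _ HH _ _ (fun a1 a2 y => sw y (fun b c => g a1 a2 b c))); last by ml.
by [].
Qed.

Lemma sp3_2 W x (g : H -> H -> H -> H -> W) : ml4 g ->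
  sw3 x (fun a b c => sw b (fun b1 b2 => g a b1 b2 c)) = sw4 x g.
Proof.
case=> L1 L2 L3 L4; rewrite /sw3 /sw4; apply: sw_ext => a y.
by rewrite (@sp2_1 _ _ HH _ _ (fun b1 b2 c => g a b1 b2 c)); last by ml.
Qed.

Lemma sp3_3 W x (g : H -> H -> H -> H -> W) :
  sw3 x (fun a b c => sw c (fun c1 c2 => g a b c1 c2)) = sw4 x g.
Proof. by []. Qed.

Lemma sp4_1 W x (g : H -> H -> H -> H -> H -> W) : ml5 g ->
  sw4 x (fun a b c d => sw a (fun a1 a2 => g a1 a2 b c d)) = sw5 x g.
Proof.
case=> L1 L2 L3 L4 L5; rewrite /sw4 /sw5; cbv beta.
have E : forall y a, sw3 y (fun b c d => sw a (fun a1 a2 => g a1 a2 b c d))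
   = sw a (fun a1 a2 => sw3 y (fun b c d => g a1 a2 b c d)).
  by move=> y a; rewrite /sw3 sw_swap; apply: sw_ext => ? ?; rewrite sw_swap.
under sw_ext => a y do rewrite E.
rewrite (@sp2_1 _ _ HH _ _ (fun a1 a2 y => sw3 y (fun b c d => g a1 a2 b c d))); last by ml.
by [].
Qed.

Lemma sp4_2 W x (g : H -> H -> H -> H -> H -> W) : ml5 g ->
  sw4 x (fun a b c d => sw b (fun b1 b2 => g a b1 b2 c d)) = sw5 x g.
Proof.
case=> L1 L2 L3 L4 L5; rewrite /sw4 /sw5; apply: sw_ext => a y.
by rewrite (@sp3_1 _ _ (fun b1 b2 c d => g a b1 b2 c d)); last by ml.
Qed.

Lemma sp4_3 W x (g : H -> H -> H -> H -> H -> W) : ml5 g ->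
  sw4 x (fun a b c d => sw c (fun c1 c2 => g a b c1 c2 d)) = sw5 x g.
Proof.
case=> L1 L2 L3 L4 L5; rewrite /sw4 /sw5; apply: sw_ext => a y.
by rewrite (@sp3_2 _ _ (fun b1 b2 c d => g a b1 b2 c d)); last by ml.
Qed.

Lemma sp4_4 W x (g : H -> H -> H -> H -> H -> W) :
  sw4 x (fun a b c d => sw d (fun d1 d2 => g a b c d1 d2)) = sw5 x g.
Proof. by []. Qed.

End Hopf2.


Section Hopf3.
Variables (F : fieldType) (H : algType F) (HH : HopfAlg H).
Local Notation S := (antip HH).
Local Notation e := (eps HH).
Local Notation sw := (sw HH).
Local Notation sw3 := (sw3 HH).
Local Notation sw4 := (sw4 HH).
Local Notation sw5 := (sw5 HH).
Implicit Types (W V : lmodType F).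

Lemma eps_linear : forall c x y, e (c *: x + y) = c * e x + e y.
Proof. exact: eps_lin. Qed.

Lemma S1 : S 1 = 1.
Proof.
have := antipl HH 1; rewrite eps_one scale1r.
have -> : \sum_(p <- cop HH 1) S p.1 * p.2 = sw 1 (fun u v => S u * v) by [].
by rewrite sw_one ?mulr1 //; ml.
Qed.

Lemma sw3_ext W x (f g : H -> H -> H -> W) :
  (forall a b c, f a b c = g a b c) -> sw3 x f = sw3 x g.
Proof. by move=> E; do 2 (apply: sw_ext => ? ?); apply: E. Qed.
Lemma sw4_ext W x (f g : H -> H -> H -> H -> W) :
  (forall a b c d, f a b c d = g a b c d) -> sw4 x f = sw4 x g.
Proof. by move=> E; do 3 (apply: sw_ext => ? ?); apply: E. Qed.
Lemma sw5_ext W x (f g : H -> H -> H -> H -> H -> W) :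
  (forall a b c d u, f a b c d u = g a b c d u) -> sw5 x f = sw5 x g.
Proof. by move=> E; do 4 (apply: sw_ext => ? ?); apply: E. Qed.

Lemma cu3_1 W x (G : H -> H -> W) : bilin G ->
  sw3 x (fun y a b => e y *: G a b) = sw x G.
Proof.
case=> L1 L2; rewrite -sp2_1; last by ml.
by apply: sw_ext => u v; rewrite counitl'.
Qed.

Lemma cu3_2 W x (G : H -> H -> W) : bilin G ->
  sw3 x (fun a y b => e y *: G a b) = sw x G.
Proof. by case=> L1 L2; apply: sw_ext => u v; rewrite counitl'. Qed.

Lemma cu3_3 W x (G : H -> H -> W) : bilin G ->
  sw3 x (fun a b y => e y *: G a b) = sw x G.
Proof. by case=> L1 L2; apply: sw_ext => u v; rewrite counitr'. Qed.

Lemma cu4_3 W x (G : H -> H -> H -> W) : ml3 G ->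
  sw4 x (fun a b y f => e y *: G a b f) = sw3 x G.
Proof.
case=> L1 L2 L3; rewrite -sp3_3; apply: sw_ext => u v; apply: sw_ext => u' v'.
by rewrite counitl'.
Qed.

Lemma col3_23r W x (K : H -> H -> W) : bilin K ->
  sw3 x (fun a b c => K a (b * S c)) = K x 1.
Proof.
case=> L1 L2; rewrite /sw3.
under sw_ext => a y do (rewrite antipr'; last by lin).
by rewrite counitr'.
Qed.

Lemma col5_34r W x (K : H -> H -> H -> H -> W) : ml4 K ->
  sw5 x (fun a b c d f => K a b (c * S d) f) = sw3 x (fun a b f => K a b 1 f).
Proof.
case=> L1 L2 L3 L4; rewrite -sp4_3; last by ml.
under sw4_ext => a b c d do (rewrite (@antipr' _ _ HH _ _ (fun z => K a b z d)); last by lin).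
by rewrite cu4_3; last by ml.
Qed.


Lemma DS W x (g : H -> H -> W) : bilin g ->
  sw (S x) g = sw x (fun u v => g (S v) (S u)).
Proof.
case=> L1 L2.
pose K z b c := sw z (fun p q => g (p * S c) (q * S b)).
have E1 : sw4 x (fun a b c d => K (S a * b) c d) = sw x (fun u v => g (S v) (S u)).
  rewrite -sp3_1; last by rewrite /K; ml.
  under sw3_ext => a b c do (rewrite (@antipl' _ _ HH _ _ (fun z => K z b c)); last by rewrite /K; lin).
  rewrite cu3_1; last by rewrite /K; ml.
  by apply: sw_ext => u v; rewrite /K sw_one ?mul1r //; ml.
have E2 : sw4 x (fun a b c d => K (S a * b) c d) = sw (S x) g.
  rewrite /K.
  under sw4_ext => a b c d do (rewrite sw_mul; last by ml).
  under sw4_ext => a b c d do rewrite sw_swap.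
  rewrite sp4_2; last by ml.
  under sw5_ext => a b c d f do under sw_ext => p1 p2 do rewrite -[p2 * c * S d]mulrA.
  rewrite (@col5_34r _ x (fun a b z f => sw (S a) (fun p1 p2 => g (p1 * b * S f) (p2 * z)))); last by ml.
  under sw3_ext => a b f do under sw_ext => p1 p2 do rewrite -[p1 * b * S f]mulrA.
  rewrite (@col3_23r _ x (fun a z => sw (S a) (fun p1 p2 => g (p1 * z) (p2 * 1)))); last by ml.
  by apply: sw_ext => u v; rewrite !mulr1.
by rewrite -E2 E1.
Qed.

Lemma Smul x y : S (x * y) = S y * S x.
Proof.
pose T a b c a' b' c' := S (a * a') * (b * b') * S c' * S c.
have E1 : sw3 x (fun a b c => sw3 y (fun a' b' c' => T a b c a' b' c')) = S y * S x.
  rewrite -(@sp2_1 _ _ HH _ x (fun a b c => sw3 y (fun a' b' c' => T a b c a' b' c'))); last by rewrite /T; ml.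
  under sw_ext => u c do under sw_ext => a b do
    (rewrite -(@sp2_1 _ _ HH _ y (fun a' b' c' => T a b c a' b' c')); last by rewrite /T; ml).
  under sw_ext => u c do rewrite sw_swap.
  under sw_ext => u c do under sw_ext => u' c' do
    (rewrite -(@sw_mul _ _ HH _ u u' (fun p q => S p * q * S c' * S c)); last by ml).
  under sw_ext => u c do under sw_ext => u' c' do
    (rewrite (@antipl' _ _ HH _ (u * u') (fun z => z * S c' * S c)); last by lin).
  under sw_ext => u c do under sw_ext => u' c' do
    rewrite eps_mul mul1r mulrC -scalerA.
  under sw_ext => u c do (rewrite (@counitl' _ _ HH _ y (fun z => e u *: (S z * S c))); last by lin).
  rewrite (@counitl' _ _ HH _ x (fun z => S y * S z)) //; lin.
have E2 : sw3 x (fun a b c => sw3 y (fun a' b' c' => T a b c a' b' c')) = S (x * y).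
  rewrite /T.
  under sw3_ext => a b c do under sw3_ext => a' b' c' do
    rewrite -!mulrA (mulrA b').
  under sw3_ext => a b c do
    (rewrite (@col3_23r _ y (fun a' z => S (a * a') * (b * (z * S c)))); last by ml).
  under sw3_ext => a b c do rewrite mul1r.
  rewrite (@col3_23r _ x (fun a z => S (a * y) * z)); last by ml.
  by rewrite mulr1.
by rewrite -E2 E1.
Qed.

End Hopf3.


Section Kad.
Variables (F : fieldType) (H : algType F) (HH : HopfAlg H)
  (A : algType F) (act : H -> A -> A) (MA : ModAlg HH act)
  (K : lmodType F) (tK : A -> A -> H -> K) (tensK : is_tensor3 tK)
  (mulK : K -> K -> K) (mulK_bil : bilin mulK).
Hypothesis mulK_gen : forall (a b : A) (h : H) (a' b' : A) (h' : H),
     mulK (tK a b h) (tK a' b' h')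
     = \sum_(p <- cop HH h) \sum_(q <- cop HH h')
         tK (a * act p.1 a') (b' * act (antip HH q.2) b) (p.2 * q.1).
Variables (T1 : lmodType F) (i1 : K -> K -> T1)
  (tens1 : is_btensor i1 (fun r k => mulK k (tK 1 r 1))
                         (fun r k => mulK (tK 1 r 1) k))
  (T2 : lmodType F) (i2 : K -> K -> T2)
  (tens2 : is_btensor i2 (fun r k => mulK (tK 1 r 1) k)
                         (fun r k => mulK (tK r 1 1) k)).

Local Notation S := (antip HH).
Local Notation e := (eps HH).
Local Notation sw := (sw HH).
Local Notation sw3 := (sw3 HH).
Local Notation sw4 := (sw4 HH).
Local Notation sw5 := (sw5 HH).

Lemma tK_l1 b h : linear (fun a => tK a b h). Proof. by case: tensK => [[_ [_ L]] _]. Qed.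
Lemma tK_l2 a h : linear (fun b => tK a b h). Proof. by case: tensK => [[_ [L _]] _]. Qed.
Lemma tK_l3 a b : linear (fun h => tK a b h). Proof. by case: tensK => [[L _] _]. Qed.
Lemma mulK_l1 k : linear (fun x => mulK x k). Proof. by case: mulK_bil. Qed.
Lemma mulK_l2 k : linear (fun x => mulK k x). Proof. by case: mulK_bil. Qed.
Lemma i1_l1 k : linear (fun x => i1 x k). Proof. by case: tens1 => [[]]. Qed.
Lemma i1_l2 k : linear (fun x => i1 k x). Proof. by case: tens1 => [[]]. Qed.
Lemma i2_l1 k : linear (fun x => i2 x k). Proof. by case: tens2 => [[]]. Qed.
Lemma i2_l2 k : linear (fun x => i2 k x). Proof. by case: tens2 => [[]]. Qed.
Lemma act_l1 a : linear (fun x => act x a). Proof. by case: (act_bilin MA). Qed.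
Lemma act_l2 h : linear (fun x => act h x). Proof. by case: (act_bilin MA). Qed.

Ltac lin_prim_hook ::= first
  [ exact: S_lin
  | (apply lin_S; exact: lin_id)
  | (apply lin_sw1; [ml | exact: lin_id])
  | exact: tK_l1 | exact: tK_l2 | exact: tK_l3
  | exact: mulK_l1 | exact: mulK_l2
  | exact: i1_l1 | exact: i1_l2 | exact: i2_l1 | exact: i2_l2
  | exact: act_l1 | exact: act_l2 ].

Lemma mulK_sw a b h a' b' h' : mulK (tK a b h) (tK a' b' h') =
  sw h (fun p1 p2 => sw h' (fun q1 q2 => tK (a * act p1 a') (b' * act (S q2) b) (p2 * q1))).
Proof. exact: mulK_gen. Qed.

Lemma act_one' a : act 1 a = a. Proof. exact: (act_one MA). Qed.
Lemma act_x1 h : act h 1 = e h *: 1. Proof. exact: (act_alg_one MA). Qed.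
Lemma act_mul' x y a : act (x * y) a = act x (act y a). Proof. exact: (act_mul MA). Qed.
Lemma act_amul h a b : act h (a * b) = sw h (fun p q => act p a * act q b).
Proof. exact: (act_alg_mul MA). Qed.

Lemma pushl (U V W : lmodType F) (B : U -> V -> W) x f k :
  (forall k, linear (fun u => B u k)) -> B (sw x f) k = sw x (fun u v => B (f u v) k).
Proof. by move=> LB; rewrite (@sw_linC _ _ HH _ _ x f (fun u => B u k)). Qed.
Lemma pushr (U V W : lmodType F) (B : U -> V -> W) x f k :
  (forall k, linear (fun u => B k u)) -> B k (sw x f) = sw x (fun u v => B k (f u v)).
Proof. by move=> LB; rewrite (@sw_linC _ _ HH _ _ x f (fun u => B k u)). Qed.

Lemma sw_swap3 (W : lmodType F) x y (G : H -> H -> H -> H -> H -> W) :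
  sw x (fun a b => sw3 y (fun c d f => G a b c d f)) =
  sw3 y (fun c d f => sw x (fun a b => G a b c d f)).
Proof.
rewrite /sw3 sw_swap; apply: sw_ext => c z; rewrite sw_swap.
by apply: sw_ext => d f.
Qed.

Lemma assoc_gen a b h a' b' h' a'' b'' h'' :
  mulK (mulK (tK a b h) (tK a' b' h')) (tK a'' b'' h'') =
  mulK (tK a b h) (mulK (tK a' b' h') (tK a'' b'' h'')).
Proof.
pose C := sw3 h (fun p1 p2 p3 => sw3 h' (fun q1 q2 q3 => sw3 h'' (fun s1 s2 s3 =>
   tK (a * (act p1 a' * act (p2 * q1) a'')) (b'' * (act (S s3) b' * act (S s2 * S q3) b))
      (p3 * (q2 * s1))))).
have EL : mulK (mulK (tK a b h) (tK a' b' h')) (tK a'' b'' h'') = C.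
  rewrite mulK_sw pushl; last by lin.
  under sw_ext => p1 p2 do (rewrite pushl; last by lin).
  under sw_ext => p1 p2 do under sw_ext => q1 q2 do rewrite mulK_sw.
  under sw_ext => p1 p2 do under sw_ext => q1 q2 do (rewrite sw_mul; last by ml).
  under sw_ext => p1 p2 do rewrite sw_swap.
  under sw_ext => p1 p2 do under sw_ext => u1 u2 do (rewrite sp2_1; last by ml).
  under sw_ext => p1 p2 do under sw_ext => u1 u2 do under sw3_ext => v1 v2 q3 do
    under sw_ext => s1 s2 do (rewrite act_amul DS; last by ml).
  under sw_ext => p1 p2 do under sw_ext => u1 u2 do under sw3_ext => v1 v2 q3 do
    under sw_ext => s1 s2 do under sw_ext => c d do rewrite -act_mul'.
  under sw_ext => p1 p2 do under sw_ext => u1 u2 do under sw3_ext => v1 v2 q3 do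
    under sw_ext => s1 s2 do (rewrite -(@sw_linC _ _ HH _ _ s2 _
       (fun w => tK (a * act p1 a' * act (u1 * v1) a'') (b'' * w) (u2 * v2 * s1))); last by lin).
  rewrite /C; apply: sw_ext => p1 p2; apply: sw_ext => u1 u2; apply: sw3_ext => v1 v2 q3.
  rewrite /sw3; apply: sw_ext => s1 y; apply: sw_ext => s2 s3.
  by rewrite !mulrA.
have ER : mulK (tK a b h) (mulK (tK a' b' h') (tK a'' b'' h'')) = C.
  rewrite (mulK_sw a') pushr; last by lin.
  under sw_ext => q1 q2 do (rewrite pushr; last by lin).
  under sw_ext => q1 q2 do under sw_ext => s1 s2 do rewrite mulK_sw.
  under sw_ext => q1 q2 do under sw_ext => s1 s2 do under sw_ext => p1 p2 do
    (rewrite sw_mul; last by ml).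
  under sw_ext => q1 q2 do under sw_ext => s1 s2 do under sw_ext => p1 p2 do
    under sw_ext => u1 u2 do under sw_ext => v1 v2 do rewrite act_amul Smul.
  under sw_ext => q1 q2 do under sw_ext => s1 s2 do under sw_ext => p1 p2 do
    under sw_ext => u1 u2 do under sw_ext => v1 v2 do under sw_ext => c d do
      rewrite -act_mul'.
  under sw_ext => q1 q2 do under sw_ext => s1 s2 do under sw_ext => p1 p2 do
    under sw_ext => u1 u2 do under sw_ext => v1 v2 do
      (rewrite -(@sw_linC _ _ HH _ _ p1 _ (fun w => tK (a * w)
          (b'' * act (S s2) b' * act (S v2 * S u2) b) (p2 * (u1 * v1)))); last by lin).
  under sw_ext => q1 q2 do under sw_ext => s1 s2 do under sw_ext => p1 p2 do
    under sw_ext => u1 u2 do rewrite sw_swap.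
  under sw_ext => q1 q2 do under sw_ext => s1 s2 do under sw_ext => p1 p2 do
    rewrite sw_swap.
  under sw_ext => q1 q2 do under sw_ext => s1 s2 do (rewrite sp2_1; last by ml).
  under sw_ext => q1 q2 do rewrite sw_swap3.
  rewrite sw_swap3.
  under sw3_ext => c d p2 do under sw_ext => q1 q2 do rewrite sw_swap.
  under sw3_ext => c d p2 do under sw_ext => q1 q2 do under sw_ext => u1 u2 do
    (rewrite sp2_1; last by ml).
  rewrite /C; apply: sw3_ext => c d p2; rewrite /sw3.
  apply: sw_ext => q1 y; apply: sw_ext => u1 u2; apply: sw_ext => v1 z; apply: sw_ext => v2 s2.
  by rewrite !mulrA.
by rewrite EL ER.
Qed.


Lemma K_ext (W : lmodType F) (g1 g2 : K -> W) : linear g1 -> linear g2 ->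
  (forall a b h, g1 (tK a b h) = g2 (tK a b h)) -> g1 =1 g2.
Proof.
move=> L1 L2 E; case: tensK => _ U.
have [_ Hu] := U W (fun a b h => g1 (tK a b h)) ltac:(ml).
exact: Hu.
Qed.

Lemma assoc x y z : mulK (mulK x y) z = mulK x (mulK y z).
Proof.
move: x; apply: (@K_ext _ (fun x => mulK (mulK x y) z) (fun x => mulK x (mulK y z)));
  [lin | lin | move=> a b h].
move: y; apply: (@K_ext _ (fun y => mulK (mulK (tK a b h) y) z)
   (fun y => mulK (tK a b h) (mulK y z))); [lin | lin | move=> a' b' h'].
move: z; apply: (@K_ext _ (fun z => mulK (mulK (tK a b h) (tK a' b' h')) z)
   (fun z => mulK (tK a b h) (mulK (tK a' b' h') z))); [lin | lin | move=> a'' b'' h''].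
exact: assoc_gen.
Qed.

Lemma tKZ1 c a b h : tK (c *: a) b h = c *: tK a b h.
Proof. exact: (linZ _ _ (tK_l1 b h)). Qed.
Lemma tKZ2 c a b h : tK a (c *: b) h = c *: tK a b h.
Proof. exact: (linZ _ _ (tK_l2 a h)). Qed.
Lemma tKZ3 c a b h : tK a b (c *: h) = c *: tK a b h.
Proof. exact: (linZ _ _ (tK_l3 a b)). Qed.

Lemma eD x y : e (x + y) = e x + e y.
Proof. by have := eps_lin HH 1 x y; rewrite scale1r mul1r. Qed.
Lemma e0 : e 0 = 0.
Proof.
have := eD 0 0; rewrite addr0 => /(congr1 (fun z => z - e 0)).
by rewrite addrK subrr => <-.
Qed.
Lemma eZ c x : e (c *: x) = c * e x.
Proof. by have := eps_lin HH c x 0; rewrite !addr0 e0 addr0. Qed.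
Lemma e_sum I (s : seq I) (G : I -> H) : e (\sum_(i <- s) G i) = \sum_(i <- s) e (G i).
Proof. by apply: (big_morph _ eD e0). Qed.

Lemma eS x : e (S x) = e x.
Proof.
rewrite -{1}(counitr HH x) (lin_sum _ _ _ (S_lin HH)) e_sum.
have -> : e x = e (e x *: 1) by rewrite eZ eps_one mulr1.
rewrite -antipl e_sum; apply: eq_bigr => p _.
by rewrite (linZ _ _ (S_lin HH)) eZ eps_mul mulrC.
Qed.



Lemma col3_23l (W : lmodType F) x (G : H -> H -> W) : bilin G ->
  sw3 x (fun a b c => G a (S b * c)) = G x 1.
Proof.
case=> L1 L2; rewrite /sw3.
under sw_ext => a y do (rewrite antipl'; last by lin).
by rewrite counitr'.
Qed.

Lemma col4_34r (W : lmodType F) x (G : H -> H -> H -> W) : ml3 G ->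
  sw4 x (fun a b c d => G a b (c * S d)) = sw x (fun a b => G a b 1).
Proof.
case=> L1 L2 L3; rewrite /sw4; apply: sw_ext => a y.
by rewrite (@col3_23r _ _ HH _ y (fun b z => G a b z)); last by ml.
Qed.

Lemma F1 a b h : mulK (tK a 1 h) (tK 1 b 1) = tK a b h.
Proof.
rewrite mulK_sw; under sw_ext => p1 p2 do (rewrite sw_one; last by ml).
under sw_ext => p1 p2 do rewrite act_x1 S1 act_one' !mulr1 mulr_algr tKZ1.
by rewrite counitl' //; lin.
Qed.

Lemma F2 x b y : mulK (tK 1 1 x) (tK 1 b y) = tK 1 b (x * y).
Proof.
rewrite mulK_sw; under sw_ext => p1 p2 do under sw_ext => q1 q2 do
  rewrite !act_x1 mul1r mulr_algr eS tKZ2.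
under sw_ext => p1 p2 do (rewrite counitr'; last by lin).
under sw_ext => p1 p2 do rewrite tKZ1.
by rewrite counitl' //; lin.
Qed.

Lemma F3 x b y : mulK (tK 1 1 x) (tK b 1 y) = sw x (fun p1 p2 => tK (act p1 b) 1 (p2 * y)).
Proof.
rewrite mulK_sw; under sw_ext => p1 p2 do under sw_ext => q1 q2 do
  rewrite act_x1 !mul1r eS tKZ2.
by apply: sw_ext => p1 p2; rewrite counitr'; last by lin.
Qed.

Lemma F4 r a b h : mulK (tK 1 r 1) (tK a b h) = sw h (fun p1 p2 => tK a (b * act (S p2) r) p1).
Proof.
rewrite mulK_sw sw_one; last by ml.
by apply: sw_ext => q1 q2; rewrite act_one' !mul1r.
Qed.

Lemma F5 b x r : mulK (tK b 1 x) (tK r 1 1) = sw x (fun p1 p2 => tK (b * act p1 r) 1 p2).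
Proof.
rewrite mulK_sw; apply: sw_ext => p1 p2; rewrite sw_one; last by ml.
by rewrite S1 act_one' mul1r !mulr1.
Qed.

Lemma F6 a b h r : mulK (tK a b h) (tK 1 r 1) = tK a (r * b) h.
Proof.
rewrite mulK_sw; under sw_ext => p1 p2 do (rewrite sw_one; last by ml).
under sw_ext => p1 p2 do rewrite act_x1 S1 act_one' !mulr1 mulr_algr tKZ1.
by rewrite counitl' //; lin.
Qed.


Lemma main_sec : exists (nu : T1 -> T2) (nuinv : T2 -> T1),
    [/\ linear nu /\ linear nuinv,
        (forall (a b : A) (h : H) (k' : K),
           nu (i1 (tK a b h) k')
           = \sum_(p <- cop HH h) i2 (tK a 1 p.1) (mulK (tK 1 b p.2) k')),
        (forall (a b : A) (h : H) (k' : K),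
           nuinv (i2 (tK a b h) k')
           = \sum_(p <- cop HH h) i1 (tK a 1 p.1) (mulK (tK b 1 (antip HH p.2)) k')),
        cancel nu nuinv & cancel nuinv nu].
Proof.
pose f1 k' a b h := sw h (fun u v => i2 (tK a 1 u) (mulK (tK 1 b v) k')).
have ex1 : forall k', exists g : K -> T2, linear g /\ forall a b h, g (tK a b h) = f1 k' a b h.
  move=> k'; case: tensK => _ U.
  have [[g [Lg Hg]] _] := U T2 (f1 k') ltac:(rewrite /f1; ml).
  by exists g.
pose G1 k' := proj1_sig (constructive_indefinite_description _ (ex1 k')).
have LG1 : forall k', linear (G1 k').
  by move=> k'; case: (proj2_sig (constructive_indefinite_description _ (ex1 k'))).
have HG1 : forall k' a b h, G1 k' (tK a b h) = f1 k' a b h.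
  by move=> k'; case: (proj2_sig (constructive_indefinite_description _ (ex1 k'))).
have LG1' : forall k, linear (fun k' => G1 k' k).
  move=> k c u v; move: k.
  apply: (@K_ext _ (fun k => G1 (c *: u + v) k) (fun k => c *: G1 u k + G1 v k)); [lin|lin|].
  move=> a b h; rewrite !HG1.
  have Lf : linear (fun k' => f1 k' a b h) by rewrite /f1; lin.
  exact: Lf.
have bal1 : forall r k k', G1 k' (mulK k (tK 1 r 1)) = G1 (mulK (tK 1 r 1) k') k.
  move=> r k k'; move: k; apply: K_ext; [lin|lin|] => a b h.
  rewrite F6 !HG1 /f1; apply: sw_ext => u v.
  by rewrite -assoc F6.
have [nu [Lnu Hnu]] : exists nu : T1 -> T2, linear nu /\ forall k k', nu (i1 k k') = G1 k' k.
  case: tens1 => _ [_ U].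
  have [[nu [Lnu Hnu]] _] := U T2 (fun k k' => G1 k' k) (conj LG1' LG1) bal1.
  by exists nu.
pose f2 k' a b h := sw h (fun u v => i1 (tK a 1 u) (mulK (tK b 1 (S v)) k')).
have ex2 : forall k', exists g : K -> T1, linear g /\ forall a b h, g (tK a b h) = f2 k' a b h.
  move=> k'; case: tensK => _ U.
  have [[g [Lg Hg]] _] := U T1 (f2 k') ltac:(rewrite /f2; ml).
  by exists g.
pose G2 k' := proj1_sig (constructive_indefinite_description _ (ex2 k')).
have LG2 : forall k', linear (G2 k').
  by move=> k'; case: (proj2_sig (constructive_indefinite_description _ (ex2 k'))).
have HG2 : forall k' a b h, G2 k' (tK a b h) = f2 k' a b h.
  by move=> k'; case: (proj2_sig (constructive_indefinite_description _ (ex2 k'))).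
have LG2' : forall k, linear (fun k' => G2 k' k).
  move=> k c u v; move: k.
  apply: (@K_ext _ (fun k => G2 (c *: u + v) k) (fun k => c *: G2 u k + G2 v k)); [lin|lin|].
  move=> a b h; rewrite !HG2.
  have Lf : linear (fun k' => f2 k' a b h) by rewrite /f2; lin.
  exact: Lf.
have bal2 : forall r k k', G2 k' (mulK (tK 1 r 1) k) = G2 (mulK (tK r 1 1) k') k.
  move=> r k k'; move: k; apply: K_ext; [lin|lin|] => a b h.
  rewrite F4 -(@sw_linC _ _ HH _ _ h _ (G2 k')) //.
  under sw_ext => p1 p2 do rewrite HG2 /f2.
  rewrite sp2_1; last by ml.
  rewrite HG2 /f2.
  under sw_ext => u v do (rewrite -assoc F5 DS; last by ml).
  under sw_ext => u v do (rewrite pushl; last by lin).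
  under sw_ext => u v do (rewrite pushr; last by lin).
  by [].
have [nuinv [Lnuinv Hnuinv]] : exists nuinv : T2 -> T1,
    linear nuinv /\ forall k k', nuinv (i2 k k') = G2 k' k.
  case: tens2 => _ [_ U].
  have [[nuinv [Lnuinv Hnuinv]] _] := U T1 (fun k k' => G2 k' k) (conj LG2' LG2) bal2.
  by exists nuinv.
exists nu, nuinv; split.
- by [].
- by move=> a b h k'; rewrite Hnu HG1.
- by move=> a b h k'; rewrite Hnuinv HG2.
- case: tens1 => Bi1 [Bal1 U].
  have [_ Hu] := U T1 i1 Bi1 Bal1.
  move=> t; apply: (Hu (fun t => nuinv (nu t)) id); [lin | exact: lin_id |] => k k' /=.
  move: k; apply: K_ext; [lin|lin|] => a b h.
  rewrite Hnu HG1 /f1 -(@sw_linC _ _ HH _ _ h _ nuinv) //.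
  under sw_ext => u v do rewrite Hnuinv HG2 /f2.
  rewrite sp2_1; last by ml.
  under sw3_ext => p q v do rewrite -assoc F2.
  rewrite (@col3_23l _ h (fun p z => i1 (tK a 1 p) (mulK (tK 1 b z) k'))); last by ml.
  by rewrite -Bal1 F1.
- case: tens2 => Bi2 [Bal2 U].
  have [_ Hu] := U T2 i2 Bi2 Bal2.
  move=> t; apply: (Hu (fun t => nu (nuinv t)) id); [lin | exact: lin_id |] => k k' /=.
  move: k; apply: K_ext; [lin|lin|] => a b h.
  rewrite Hnuinv HG2 /f2 -(@sw_linC _ _ HH _ _ h _ nu) //.
  under sw_ext => u v do rewrite Hnu HG1 /f1.
  rewrite sp2_1; last by ml.
  under sw3_ext => p q v do rewrite -assoc F3.
  under sw3_ext => p q v do (rewrite pushl; last by lin).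
  under sw3_ext => p q v do (rewrite pushr; last by lin).
  rewrite sp3_2; last by ml.
  rewrite (@col4_34r _ h (fun p c z => i2 (tK a 1 p) (mulK (tK (act c b) 1 z) k'))); last by ml.
  under sw_ext => p c do rewrite -Bal2 F4.
  under sw_ext => p c do (rewrite pushl; last by lin).
  rewrite sp2_1; last by ml.
  under sw3_ext => p1 p2 c do rewrite mul1r -act_mul'.
  rewrite (@col3_23l _ h (fun p z => i2 (tK a (act z b) p) k')); last by ml.
  by rewrite act_one'.
Qed.

End Kad.


Unset Implicit Arguments.

Theorem mainTheorem10 (F : fieldType) (H : algType F) (HH : HopfAlg H)
  (A : algType F) (act : H -> A -> A) (MA : ModAlg HH act)
  (* K = (A (x) A^op) >< H, underlying space A (x) A (x) H *)
  (K : lmodType F) (tK : A -> A -> H -> K) (tensK : is_tensor3 tK)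
  (mulK : K -> K -> K) (mulK_bil : bilin mulK)
  (mulK_gen : forall (a b : A) (h : H) (a' b' : A) (h' : H),
     mulK (tK a b h) (tK a' b' h')
     = \sum_(p <- cop HH h) \sum_(q <- cop HH h')
         tK (a * act p.1 a') (b' * act (antip HH q.2) b) (p.2 * q.1))
  (* T1 = K (x)_{A^op} K : k t(r) (x) k' = k (x) t(r) k' *)
  (T1 : lmodType F) (i1 : K -> K -> T1)
  (tens1 : is_btensor i1 (fun r k => mulK k (tK 1 r 1))
                         (fun r k => mulK (tK 1 r 1) k))
  (* T2 = K (x)_A K : t(r) k (x) k' = k (x) s(r) k' *)
  (T2 : lmodType F) (i2 : K -> K -> T2)
  (tens2 : is_btensor i2 (fun r k => mulK (tK 1 r 1) k)
                         (fun r k => mulK (tK r 1 1) k)) :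
  exists (nu : T1 -> T2) (nuinv : T2 -> T1),
    [/\ linear nu /\ linear nuinv,
        (* nu (k (x) k') = k_(1) (x)_A k_(2) k', with the Kadison coproduct *)
        (forall (a b : A) (h : H) (k' : K),
           nu (i1 (tK a b h) k')
           = \sum_(p <- cop HH h) i2 (tK a 1 p.1) (mulK (tK 1 b p.2) k')),
        (forall (a b : A) (h : H) (k' : K),
           nuinv (i2 (tK a b h) k')
           = \sum_(p <- cop HH h) i1 (tK a 1 p.1) (mulK (tK b 1 (antip HH p.2)) k')),
        cancel nu nuinv & cancel nuinv nu].

Proof. exact: (@main_sec F H HH A act MA K tK tensK mulK mulK_bil mulK_gen T1 i1 tens1 T2 i2 tens2). Qed.
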